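(* Let $G$ be an $(N,k)$ Adinkra with associated code $C$, with the matrices $\gamma_1,\dots,\gamma_N$ defined as in the context, and let $M=\gamma_{i_1}\gamma_{i_2}\cdots\gamma_{i_t}$ for some $i_1,\dots,i_t\in\{1,\dots,N\}$. Then, for a vertex $x$, the diagonal entry $M_{x,x}$ is non-zero if and only if the walk starting at $x$ and successively following edges of colors $i_1,i_2,\dots,i_t$ is closed (returns to $x$). This happens in one of two ways: (i) trivially, when each edge color occurs an even number of times in $(i_1,\dots,i_t)$, or (ii) when the vector $w\in\mathbb{Z}_2^N$ with $w_i=1$ exactly for the colors occurring an odd number of times in $(i_1,\dots,i_t)$ is a (nonzero) codeword of $C$.
   Context: An Adinkra of dimension $N$ is a finite connected simple graph $G=(V,E)$ with: a bipartition of $V$ into bosons and fermions (every edge joins a boson and a fermion); a height function (irrelevant here); a coloring of $E$ by colors $\{1,\dots,N\}$ such that each vertex is incident to exactly one edge of each color; an edge parity $\pi:E\to\mathbb{Z}_2$ (parity $1$ = dashed); such that every path with edge colors $(i,j)$, $i\ne j$, lies in a unique 4-cycle with colors $(i,j,i,j)$, each having an odd number of dashed edges. If $|V|=2^{N-k}$, $G$ is an $(N,k)$ Adinkra; it has $n=2^{N-k-1}$ bosons $b_1,\dots,b_n$ and $n$ fermions $f_1,\dots,f_n$. A doubly even $(N,k)$ code is a $k$-dimensional subspace of $\mathbb{Z}_2^N$ all of whose elements have weight $\equiv0\pmod4$; $G$ is obtained (up to switching and relabeling) from an $N$-cube Adinkra with vertex labels $\mathbb{Z}_2^N$ (color-$i$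 edges joining $v,v+e_i$) by identifying vertices whose labels differ by elements of a doubly even $(N,k)$ code $C$, its associated code. For each color $i$, $L_i$ is the $n\times n$ matrix with $(L_i)_{r,s}=+1$ if $b_r,f_s$ are joined by a solid edge of color $i$, $-1$ if joined by a dashed edge of color $i$, and $0$ otherwise. $\gamma_i$ is the $2n\times 2n$ real symmetric matrix $\begin{pmatrix}0&L_i\\ L_i^{T}&0\end{pmatrix}$, with rows and columns indexed by $V$ (bosons first, then fermions). *)

(* Defs.v *)
From HB Require Import structures.
From mathcomp Require Import all_boot all_order all_algebra.
Set Implicit Arguments. Unset Strict Implicit. Unset Printing Implicit Defensive.
Import Order.TTheory GRing.Theory Num.Theory.
Local Open Scope ring_scope.

(* Vertices of an Adinkra with n bosons and n fermions are 'I_(n + n):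
   boson b_r is [lshift n r], fermion f_s is [rshift n s] (bosons first).
   Colours {1..N} are represented by 'I_N.
   adj    : the (simple) edge relation
   col    : colour of the edge {x,y} (meaningful only when adj x y)
   dashed : parity of the edge {x,y} (true = dashed = parity 1)        *)

Section Adinkra.
Variables (N n : nat).
Local Notation V := 'I_(n + n).
Variables (adj : rel V) (col : V -> V -> 'I_N) (dashed : V -> V -> bool).

Definition is_boson (x : V) : bool := (x < n)%N.

Definition cycle4 (i j : 'I_N) (x y z w : V) : Prop :=
  [/\ adj x y /\ col x y = i, adj y z /\ col y z = j,
      adj z w /\ col z w = i & adj w x /\ col w x = j].

Definition is_adinkra : Prop :=
  (forall x y, adj x y = adj y x) /\
  (forall x, ~~ adj x x) /\
  (forall x y, connect adj x y) /\
  (forall x y, adj x y -> is_boson x != is_boson y) /\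
  (forall x y, adj x y -> col x y = col y x /\ dashed x y = dashed y x) /\
  (forall (x : V) (i : 'I_N), #|[set y | adj x y & col x y == i]| = 1%N) /\
  (forall (i j : 'I_N) (x y z : V), i != j ->
     adj x y -> col x y = i -> adj y z -> col y z = j ->
     exists w, [/\ cycle4 i j x y z w,
                  odd (dashed x y + dashed y z + dashed z w + dashed w x) &
                  forall w', cycle4 i j x y z w' -> w' = w]).

Definition step (x : V) (i : 'I_N) : V :=
  odflt x [pick y | adj x y & col x y == i].

Definition walk_end (x : V) (s : seq 'I_N) : V := foldl step x s.

Definition Lmat (i : 'I_N) : 'M[int]_n :=
  \matrix_(r < n, s < n)
    (if adj (lshift n r) (rshift n s) && (col (lshift n r) (rshift n s) == i)
     then (if dashed (lshift n r) (rshift n s) then -1 else 1)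
     else 0).

Definition gamma (i : 'I_N) : 'M[int]_(n + n) :=
  block_mx 0 (Lmat i) (Lmat i)^T 0.

Definition gamma_prod (s : seq 'I_N) : 'M[int]_(n + n) :=
  foldr (fun i A => gamma i *m A) 1%:M s.

End Adinkra.

Definition weight (N : nat) (w : 'rV['F_2]_N) : nat := #|[set i | w 0 i != 0]|.

Definition doubly_even_code (N k : nat) (C : {vspace 'rV['F_2]_N}) : Prop :=
  \dim C = k /\ forall w, w \in C -> (4 %| weight w)%N.

Definition unit_vec (N : nat) (i : 'I_N) : 'rV['F_2]_N := \row_j (j == i)%:R.

(* C is the associated code of the Adinkra: up to relabeling (and switching,
   which only affects parities) the coloured graph is the quotient of the
   N-cube (labels Z_2^N, colour-i edges v -- v + e_i) by C. *)
Definition associated_code (N n : nat) (adj : rel 'I_(n + n))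
    (col : 'I_(n + n) -> 'I_(n + n) -> 'I_N) (C : {vspace 'rV['F_2]_N}) : Prop :=
  exists lab : 'rV['F_2]_N -> 'I_(n + n),
    [/\ (forall x, exists v, lab v = x),
        (forall u v, lab u = lab v <-> u - v \in C) &
        (forall v (i : 'I_N), adj (lab v) (lab (v + unit_vec i)) /\
                              col (lab v) (lab (v + unit_vec i)) = i)].

Definition odd_colours (N : nat) (s : seq 'I_N) : 'rV['F_2]_N :=
  \row_i (odd (count_mem i s))%:R.

(* Main.v *)
Require Import Defs.
From HB Require Import structures.
From mathcomp Require Import all_boot all_order all_algebra.
Import Order.TTheory GRing.Theory Num.Theory.
Local Open Scope ring_scope.

Section Aux.
Variables (N n : nat) (adj : rel 'I_(n + n))
    (col : 'I_(n + n) -> 'I_(n + n) -> 'I_N)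
    (dashed : 'I_(n + n) -> 'I_(n + n) -> bool).
Hypothesis HA : is_adinkra adj col dashed.

Lemma step_spec x i : adj x (step adj col x i) && (col x (step adj col x i) == i)
  /\ forall y, adj x y && (col x y == i) -> y = step adj col x i.
Proof.
case: HA => _ [_ [_ [_ [_ [Hc _]]]]].
have /cards1P [a Ha] : #|[set y | adj x y & col x y == i]| == 1%N by rewrite Hc.
have Hy y : (adj x y && (col x y == i)) = (y == a).
  by move/setP: Ha => /(_ y); rewrite !inE.
rewrite /step; case: pickP => [y Hy'|H].
  split=> //= z Hz; move: Hy'; rewrite Hy => /eqP ->; apply/eqP; by rewrite -Hy.
by move: (H a); rewrite /= Hy eqxx.
Qed.

Lemma gamma_entry i x y : gamma adj col dashed i x y =
  if adj x y && (col x y == i) then (if dashed x y then -1 else 1) else 0.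
Proof.
case: HA => Hsym [_ [_ [Hbip [Hcd _]]]].
have nb r r' : adj (lshift n r) (lshift n r') = false.
  apply/negP => /Hbip; by rewrite /is_boson /= !ltn_ord.
have nf r r' : adj (rshift n r) (rshift n r') = false.
  apply/negP => /Hbip; by rewrite /is_boson /= -!ltn_subRL !subnn.
rewrite /gamma -[x]splitK -[y]splitK.
case: (split x) => r; case: (split y) => r' /=.
- by rewrite block_mxEul mxE nb.
- by rewrite block_mxEur mxE.
- rewrite block_mxEdl !mxE Hsym.
  case: (boolP (adj _ _)) => //= Ha.
  by case: (Hcd _ _ Ha) => -> ->.
- by rewrite block_mxEdr mxE nf.
Qed.

Lemma gamma_prod_entry s x : exists e : int, (e = 1 \/ e = -1) /\
  forall y, gamma_prod adj col dashed s x y =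
            if y == walk_end adj col x s then e else 0.
Proof.
elim: s x => [|i s IH] x /=.
  exists 1; split; first by left.
  move=> y; rewrite /gamma_prod /= mxE eq_sym; by case: (y == x).
have [Hst Hun] := step_spec x i.
set z := step adj col x i in Hst Hun *.
have [e [He Hy]] := IH z.
exists ((if dashed x z then -1 else 1) * e); split.
  by case: (dashed x z); case: He => ->; rewrite ?mulN1r ?opprK ?mul1r; by [left|right].
move=> y; rewrite /gamma_prod /= mxE (bigD1 z) //= big1 ?addr0.
  rewrite gamma_entry Hst -/(gamma_prod adj col dashed s) Hy.
  by case: (y == walk_end _ _ _ _); rewrite ?mulr0.
move=> w Hw; rewrite gamma_entry; case: ifP => [Haw|]; last by rewrite mul0r.
by move: Hw; rewrite (Hun _ Haw) eqxx.
Qed.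

End Aux.

Lemma F2_addb (b1 b2 : bool) : ((b1 (+) b2)%:R : 'F_2) = b1%:R + b2%:R.
Proof. by case: b1; case: b2; apply/val_inj. Qed.

Lemma odd_colours_cons N (i : 'I_N) s :
  odd_colours (i :: s) = unit_vec i + odd_colours s.
Proof.
apply/matrixP => a j; rewrite !mxE /= oddD F2_addb; congr (_ + _).
by rewrite eq_sym; case: (j == i).
Qed.

Theorem mainTheorem11 (N k n : nat) (adj : rel 'I_(n + n))
    (col : 'I_(n + n) -> 'I_(n + n) -> 'I_N)
    (dashed : 'I_(n + n) -> 'I_(n + n) -> bool)
    (C : {vspace 'rV['F_2]_N}) :
  is_adinkra adj col dashed ->
  (n + n = 2 ^ (N - k))%N ->
  doubly_even_code k C ->
  associated_code adj col C ->
  forall (s : seq 'I_N) (x : 'I_(n + n)),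
    (gamma_prod adj col dashed s x x != 0 <-> walk_end adj col x s = x) /\
    (walk_end adj col x s = x <->
       (odd_colours s = 0 \/ (odd_colours s != 0 /\ odd_colours s \in C))).
Proof.
move=> HA _ _ [lab [Hsurj Heq Hedge]] s x; split.
  have [e [He Hy]] := @gamma_prod_entry N n adj col dashed HA s x.
  rewrite Hy; split.
    case: (x =P walk_end _ _ _ _) => [<- //|_]; by rewrite eqxx.
  move=> ->; rewrite eqxx; by case: He => ->.
have Hstep v i : step adj col (lab v) i = lab (v + unit_vec i).
  have [_ Hun] := @step_spec N n adj col dashed HA (lab v) i.
  symmetry; apply: Hun; case: (Hedge v i) => -> ->; by rewrite eqxx.
have Hw v : walk_end adj col (lab v) s = lab (v + odd_colours s).
  elim: s v => [|i s IH] v.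
    suff -> : odd_colours ([::] : seq 'I_N) = 0 by rewrite addr0.
    by apply/matrixP => a j; rewrite !mxE.
  rewrite /walk_end /= Hstep -/(walk_end _ _ _ _) IH odd_colours_cons addrA //.
have [v <-] := Hsurj x.
rewrite Hw.
have := Heq (v + odd_colours s) v; rewrite [_ - v]addrC addKr => E.
apply: (iff_trans E).
case: (eqVneq (odd_colours s) 0) => [->|Hn]; first by rewrite mem0v; split; auto.
split=> [H|]; first by right.
case=> [H0|[]] //; by rewrite H0 eqxx in Hn.
Qed.
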